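(* A graph $G$ admits a full $C_5$-colouring if and only if $G$ has no induced subgraph isomorphic to $C_3$, to $K_1+P_4$, or to $2K_2$.
   Context: All graphs are finite, simple and loopless. $P_n$ and $C_n$ denote the path and cycle on $n$ vertices; $+$ denotes disjoint union and $2K_2$ is the disjoint union of two edges. A full $C_5$-colouring of $G$ is a map $\varphi\colon V(G)\to V(C_5)$ such that for all $x,y\in V(G)$, $xy\in E(G)$ if and only if $\varphi(x)\varphi(y)\in E(C_5)$. *)

(* Defs.v *)
From mathcomp Require Import all_boot.
Set Implicit Arguments.
Unset Strict Implicit.
Unset Printing Implicit Defensive.

(* A finite simple loopless graph is a finType T of vertices together with a
   symmetric irreflexive boolean adjacency relation e : rel T. *)

Definition C5_adj : rel 'I_5 :=
  fun i j => let a := nat_of_ord i in let b := nat_of_ord j in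
    (a.+1 %% 5 == b) || (b.+1 %% 5 == a).

Definition full_C5_colouring (T : finType) (e : rel T) (phi : T -> 'I_5) : Prop :=
  forall x y : T, e x y = C5_adj (phi x) (phi y).

Definition has_full_C5_colouring (T : finType) (e : rel T) : Prop :=
  exists phi : T -> 'I_5, full_C5_colouring e phi.

Definition has_induced_copy (U T : finType) (h : rel U) (e : rel T) : Prop :=
  exists f : U -> T, injective f /\ forall a b : U, e (f a) (f b) = h a b.

Definition C3_adj : rel 'I_3 := fun i j => i != j.

Definition K1P4_adj : rel 'I_5 :=
  fun i j => let a := nat_of_ord i in let b := nat_of_ord j in
    [&& a < 4, b < 4 & (a.+1 == b) || (b.+1 == a)].

Definition twoK2_adj : rel 'I_4 :=
  fun i j => let a := nat_of_ord i in let b := nat_of_ord j in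
    [|| (a == 0) && (b == 1), (a == 1) && (b == 0),
        (a == 2) && (b == 3) | (a == 3) && (b == 2)].

(* Main.v *)
Require Import Defs.
From mathcomp Require Import all_boot.
Set Implicit Arguments.
Unset Strict Implicit.
Unset Printing Implicit Defensive.

Definition twin (T : finType) (e : rel T) (x y : T) := [forall w, e x w == e y w].

Lemma twinE (T : finType) (e : rel T) x y w : twin e x y -> e x w = e y w.
Proof. by move/forallP/(_ w)/eqP. Qed.

Lemma twinN (T : finType) (e : rel T) x y : ~~ twin e x y -> exists z, e x z != e y z.
Proof. by move/forallPn. Qed.

Ltac ee e_sym := first [ assumption | (rewrite e_sym; assumption) ].

Lemma L23 (T : finType) (e : rel T) (e_sym : symmetric e) (e_irr : irreflexive e)
  (tri : forall a b c, e a b -> e b c -> e a c -> False)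
  (k2 : forall a b c d, e a b -> e c d -> ~~ e a c -> ~~ e a d -> ~~ e b c -> ~~ e b d -> False)
  (pk : forall a b c d w, e a b -> e b c -> e c d -> ~~ e a c -> ~~ e b d -> ~~ e a d ->
        ~~ e w a -> ~~ e w b -> ~~ e w c -> ~~ e w d -> False)
  u v x y : e u v -> e v x -> ~~ e u x -> ~~ twin e x u -> ~~ e u y -> ~~ e v y -> e x y.
Proof.
move=> huv hvx hux ntx huy hvy.
apply/negPn/negP => hxy.
have [z hz] := twinN ntx.
case: (boolP (e x z)) => hxz.
- have huz : ~~ e u z by move: hz; rewrite hxz; case: (e u z).
  have hvz : ~~ e v z by apply/negP => h; apply: (tri v x z); ee e_sym.
  case: (boolP (e y z)) => hyz.
  + by apply: (k2 y z u v); ee e_sym.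
  + by apply: (pk z x v u y); ee e_sym.
- have huz : e u z by move: hz; rewrite (negbTE hxz); case: (e u z).
  have hvz : ~~ e v z by apply/negP => h; apply: (tri u v z); ee e_sym.
  case: (boolP (e y z)) => hyz.
  + by apply: (k2 y z v x); ee e_sym.
  + by apply: (pk z u v x y); ee e_sym.
Qed.

Lemma L24 (T : finType) (e : rel T) (e_sym : symmetric e) (e_irr : irreflexive e)
  (tri : forall a b c, e a b -> e b c -> e a c -> False)
  (k2 : forall a b c d, e a b -> e c d -> ~~ e a c -> ~~ e a d -> ~~ e b c -> ~~ e b d -> False)
  (pk : forall a b c d w, e a b -> e b c -> e c d -> ~~ e a c -> ~~ e b d -> ~~ e a d ->
        ~~ e w a -> ~~ e w b -> ~~ e w c -> ~~ e w d -> False)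
  u v x y : e u v -> e v x -> ~~ e u x -> ~~ twin e x u -> e u y -> ~~ e v y -> ~~ twin e y v
  -> ~~ e x y.
Proof.
move=> huv hvx hux ntx huy hvy nty.
apply/negP => hxy.
have [z hz] := twinN ntx.
have [w hw] := twinN nty.
have Hw : (e y w /\ ~~ e v w /\ ~~ e x w /\ ~~ e u w) \/
          (~~ e y w /\ e v w /\ ~~ e x w /\ ~~ e u w).
  case: (boolP (e y w)) => hyw.
  - have hvw : ~~ e v w by move: hw; rewrite hyw; case: (e v w).
    left; do 3! (split => //); apply/negP => h.
    + by apply: (tri x y w); ee e_sym.
    + by apply: (tri u y w); ee e_sym.
  - have hvw : e v w by move: hw; rewrite (negbTE hyw); case: (e v w).
    right; do 3! (split => //); apply/negP => h.
    + by apply: (tri v x w); ee e_sym.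
    + by apply: (tri u v w); ee e_sym.
case: (boolP (e x z)) => hxz.
- have huz : ~~ e u z by move: hz; rewrite hxz; case: (e u z).
  have hyz : ~~ e y z by apply/negP => h; apply: (tri x y z); ee e_sym.
  have hvz : ~~ e v z by apply/negP => h; apply: (tri v x z); ee e_sym.
  case: Hw => [[hyw [hvw [hxw huw]]] | [hyw [hvw [hxw huw]]]].
  + case: (boolP (e w z)) => hwz.
    * by apply: (k2 z w u v); ee e_sym.
    * by apply: (pk z x v u w); ee e_sym.
  + case: (boolP (e w z)) => hwz.
    * by apply: (k2 w z y u); ee e_sym.
    * by apply: (pk z x y u w); ee e_sym.
- have huz : e u z by move: hz; rewrite (negbTE hxz); case: (e u z).
  have hyz : ~~ e y z by apply/negP => h; apply: (tri u y z); ee e_sym.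
  have hvz : ~~ e v z by apply/negP => h; apply: (tri u v z); ee e_sym.
  case: Hw => [[hyw [hvw [hxw huw]]] | [hyw [hvw [hxw huw]]]].
  + case: (boolP (e w z)) => hwz.
    * by apply: (k2 w z x v); ee e_sym.
    * by apply: (pk z u v x w); ee e_sym.
  + case: (boolP (e w z)) => hwz.
    * by apply: (k2 w z y x); ee e_sym.
    * by apply: (pk z u y x w); ee e_sym.
Qed.

Definition col (T : finType) (e : rel T) (u v x : T) : 'I_5 :=
  if twin e x u then @Ordinal 5 0 isT else if twin e x v then @Ordinal 5 1 isT
  else if e u x then @Ordinal 5 4 isT else if e v x then @Ordinal 5 2 isT
  else @Ordinal 5 3 isT.

Lemma main_col (T : finType) (e : rel T) (e_sym : symmetric e) (e_irr : irreflexive e)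
  (tri : forall a b c, e a b -> e b c -> e a c -> False)
  (k2 : forall a b c d, e a b -> e c d -> ~~ e a c -> ~~ e a d -> ~~ e b c -> ~~ e b d -> False)
  (pk : forall a b c d w, e a b -> e b c -> e c d -> ~~ e a c -> ~~ e b d -> ~~ e a d ->
        ~~ e w a -> ~~ e w b -> ~~ e w c -> ~~ e w d -> False)
  u v : e u v -> full_C5_colouring e (col e u v).
Proof.
move=> huv.
have hvu : e v u by rewrite e_sym.
have cls : forall y, let c := nat_of_ord (col e u v y) in
  (e u y = (c == 1) || (c == 4)) /\ (e v y = (c == 0) || (c == 2)).
  move=> y; rewrite /col.
  case: (boolP (twin e y u)) => [ty|nty] /=.
    by rewrite e_sym (twinE _ ty) e_irr e_sym (twinE _ ty).
  case: (boolP (twin e y v)) => [ty|nty2] /=.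
    by rewrite e_sym (twinE _ ty) hvu e_sym (twinE _ ty) e_irr.
  case: (boolP (e u y)) => huy /=.
    by split => //; apply/negP => h; apply: (tri u v y).
  by case: (e v y).
have C0 : forall x y, nat_of_ord (col e u v x) = 0 -> e x y = e u y.
  move=> x y; rewrite /col; case: (boolP (twin e x u)) => [tx _|ntx].
    exact: twinE.
  by case: (twin e x v); case: (e u x) => //; case: (e v x).
have C1 : forall x y, nat_of_ord (col e u v x) = 1 -> e x y = e v y.
  move=> x y; rewrite /col; case: (boolP (twin e x u)) => [tx|ntx] //.
  case: (boolP (twin e x v)) => [tx _|ntx2]; first exact: twinE.
  by case: (e u x) => //; case: (e v x).
have C2 : forall x, nat_of_ord (col e u v x) = 2 -> ~~ twin e x u.
  move=> x; rewrite /col; by case: (twin e x u).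
have C4 : forall x, nat_of_ord (col e u v x) = 4 -> ~~ twin e x v.
  move=> x; rewrite /col; case: (twin e x u) => //; by case: (twin e x v).
have key : forall x y, (nat_of_ord (col e u v x) <= nat_of_ord (col e u v y))%N ->
    e x y = C5_adj (col e u v x) (col e u v y).
  move=> x y.
  have [hux hvx] := cls x; have [huy hvy] := cls y.
  move: (C0 x y) (C1 x y) (C0 y x) (C1 y x) (C2 x) (C4 x) (C2 y) (C4 y) hux hvx huy hvy.
  rewrite /C5_adj.
  case: (col e u v x) => [[|[|[|[|[|i]]]]] Hi] //=;
  case: (col e u v y) => [[|[|[|[|[|j]]]]] Hj] //= c0 c1 c0y c1y c2x c4x c2y c4y hux hvx huy hvy _;
    first [rewrite (c0 erefl) | rewrite (c1 erefl) | rewrite e_sym (c0y erefl) | rewrite e_sym (c1y erefl) | idtac];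
    rewrite ?hux ?hvx ?huy ?hvy //.
  - by apply/negbTE/negP => h; apply: (tri v x y); rewrite ?hvx ?hvy.
  - by apply: (L23 e_sym e_irr tri k2 pk huv); rewrite ?hux ?hvx ?huy ?hvy ?c2x.
  - by apply/negbTE; apply: (L24 e_sym e_irr tri k2 pk huv); rewrite ?hux ?hvx ?huy ?hvy ?c2x ?c4y.
  - apply/negbTE/negP => h; apply: (k2 x y u v) => //; rewrite e_sym;
      by rewrite ?hux ?hvx ?huy ?hvy.
  - rewrite e_sym; by apply: (L23 e_sym e_irr tri k2 pk hvu); rewrite ?hux ?hvx ?huy ?hvy ?c4y.
  - by apply/negbTE/negP => h; apply: (tri u x y); rewrite ?hux ?huy.
move=> x y; case: (leqP (col e u v x) (col e u v y)) => h; first exact: key.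
by rewrite e_sym key ?(ltnW h) // /C5_adj orbC.
Qed.

Definition C5n (a b : nat) := (a.+1 %% 5 == b) || (b.+1 %% 5 == a).
Definition I5 := iota 0 5.
Lemma chk3 : all (fun a => all (fun b => all (fun c => ~~ [&& C5n a b, C5n b c & C5n a c]) I5) I5) I5.
Proof. by vm_compute. Qed.
Lemma chk2 : all (fun a => all (fun b => all (fun c => all (fun d => ~~ [&& C5n a b, C5n c d, ~~ C5n a c, ~~ C5n a d, ~~ C5n b c & ~~ C5n b d]) I5) I5) I5) I5.
Proof. by vm_compute. Qed.
Lemma chk1 : all (fun a => all (fun b => all (fun c => all (fun d => all (fun w => ~~ [&& C5n a b, C5n b c, C5n c d, ~~ C5n a c, ~~ C5n b d, ~~ C5n a d, ~~ C5n w a, ~~ C5n w b, ~~ C5n w c & ~~ C5n w d]) I5) I5) I5) I5) I5.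
Proof. by vm_compute. Qed.

Lemma C5nE (a b : 'I_5) : C5n a b = C5_adj a b.
Proof. by []. Qed.

Lemma memI5 (a : 'I_5) : nat_of_ord a \in I5.
Proof. by rewrite mem_iota ltn_ord. Qed.

Lemma mk_copy (T : finType) (e : rel T) n (h : rel 'I_n) (hn : nat -> nat -> bool) (f : nat -> T) :
  (forall i j : 'I_n, h i j = hn i j) ->
  all (fun i => all (fun j => (i == j) || has (fun k => hn i k != hn j k) (iota 0 n)) (iota 0 n)) (iota 0 n) ->
  (forall i j, i < n -> j < n -> e (f i) (f j) = hn i j) -> has_induced_copy h e.
Proof.
move=> hh hall hf; exists (fun i : 'I_n => f i); split; last first.
  by move=> a b; rewrite hh hf.
move=> i j fij; apply: val_inj => /=.
have mi : forall a : 'I_n, nat_of_ord a \in iota 0 n by move=> a; rewrite mem_iota ltn_ord.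
move/allP: hall => /(_ _ (mi i)) /allP /(_ _ (mi j)) /orP [/eqP //|/hasP [k]].
rewrite mem_iota /= => kn.
by rewrite -!hf ?ltn_ord // fij eqxx.
Qed.

Lemma copy_col (T : finType) (e : rel T) n (h : rel 'I_n) phi :
  full_C5_colouring e phi -> has_induced_copy h e ->
  exists g : 'I_n -> 'I_5, forall i j, h i j = C5_adj (g i) (g j).
Proof.
move=> Hphi [f [_ Hf]]; exists (fun i => phi (f i)) => i j.
by rewrite -Hf Hphi.
Qed.

Ltac fin e_sym e_irr :=
  first [ by rewrite e_irr | by (apply/idP; ee e_sym) | by (apply/negbTE; ee e_sym) | done ].

Theorem corollary3p11 (T : finType) (e : rel T)
  (e_sym : symmetric e) (e_irr : irreflexive e) :
  has_full_C5_colouring e <->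
  (~ has_induced_copy C3_adj e /\ ~ has_induced_copy K1P4_adj e /\
   ~ has_induced_copy twoK2_adj e).
Proof.
split.
  move=> [phi Hphi]; split; [|split].
  - move=> /(copy_col Hphi) [g E].
    move/allP: chk3 => /(_ _ (memI5 (g (@Ordinal 3 0 isT)))) /allP
       /(_ _ (memI5 (g (@Ordinal 3 1 isT)))) /allP /(_ _ (memI5 (g (@Ordinal 3 2 isT)))).
    by rewrite !C5nE -!E.
  - move=> /(copy_col Hphi) [g E].
    move/allP: chk1 => /(_ _ (memI5 (g (@Ordinal 5 0 isT)))) /allP
       /(_ _ (memI5 (g (@Ordinal 5 1 isT)))) /allP /(_ _ (memI5 (g (@Ordinal 5 2 isT))))
       /allP /(_ _ (memI5 (g (@Ordinal 5 3 isT)))) /allP /(_ _ (memI5 (g (@Ordinal 5 4 isT)))).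
    by rewrite !C5nE -!E.
  - move=> /(copy_col Hphi) [g E].
    move/allP: chk2 => /(_ _ (memI5 (g (@Ordinal 4 0 isT)))) /allP
       /(_ _ (memI5 (g (@Ordinal 4 1 isT)))) /allP /(_ _ (memI5 (g (@Ordinal 4 2 isT))))
       /allP /(_ _ (memI5 (g (@Ordinal 4 3 isT)))).
    by rewrite !C5nE -!E.
move=> [N3 [N1 N2]].
have tri : forall a b c, e a b -> e b c -> e a c -> False.
  move=> a b c hab hbc hac; apply: N3.
  apply: (@mk_copy _ _ 3 _ (fun i j => i != j) (fun k => nth a [:: a; b; c] k)).
  - by [].
  - by vm_compute.
  - by move=> [|[|[|i]]] [|[|[|j]]] //= _ _; fin e_sym e_irr.
have k2 : forall a b c d, e a b -> e c d -> ~~ e a c -> ~~ e a d -> ~~ e b c -> ~~ e b d -> False.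
  move=> a b c d hab hcd hac had hbc hbd; apply: N2.
  apply: (@mk_copy _ _ 4 _ (fun a b => [|| (a == 0) && (b == 1), (a == 1) && (b == 0),
        (a == 2) && (b == 3) | (a == 3) && (b == 2)]) (fun k => nth a [:: a; b; c; d] k)).
  - by [].
  - by vm_compute.
  - by move=> [|[|[|[|i]]]] [|[|[|[|j]]]] //= _ _; fin e_sym e_irr.
have pk : forall a b c d w, e a b -> e b c -> e c d -> ~~ e a c -> ~~ e b d -> ~~ e a d ->
        ~~ e w a -> ~~ e w b -> ~~ e w c -> ~~ e w d -> False.
  move=> a b c d w hab hbc hcd hac hbd had hwa hwb hwc hwd; apply: N1.
  apply: (@mk_copy _ _ 5 _ (fun a b => [&& a < 4, b < 4 & (a.+1 == b) || (b.+1 == a)])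
     (fun k => nth a [:: a; b; c; d; w] k)).
  - by [].
  - by vm_compute.
  - by move=> [|[|[|[|[|i]]]]] [|[|[|[|[|j]]]]] //= _ _; fin e_sym e_irr.
case: (pickP (fun p : T * T => e p.1 p.2)) => [[u v] /= huv|none].
  by exists (col e u v); apply: (main_col e_sym e_irr tri k2 pk huv).
exists (fun _ => @Ordinal 5 0 isT) => x y.
by move: (none (x, y)) => /= ->.
Qed.
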